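(* Let $X=\{x_j:j\in J\}\subset\mathbb{R}^2$ be finite with $n=|J|$, and suppose its $1$-centre $C$ is equidistant from all points of $X$. Then $C$ is the quadratic min-power centre of $X$ if and only if $C\in\mathrm{conv}(\mathcal{M})$.
   Context: The quadratic min-power centre is the unique minimiser of $P(s)=\sum_{i\in J}\|s-x_i\|^2+\max_{i\in J}\|s-x_i\|^2$. $C$ is the centre of the minimum enclosing circle of $X$. $\mathcal{M}=\{M_j:j\in J\}$ with $M_j=\frac{1}{n+1}\big(x_j+\sum_{i\in J}x_i\big)$. *)

(* Defs.v *)
From HB Require Import structures.
From mathcomp Require Import all_boot all_order all_algebra.
From mathcomp Require Import reals.
Set Implicit Arguments. Unset Strict Implicit. Unset Printing Implicit Defensive.
Import Order.TTheory GRing.Theory Num.Theory.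
Local Open Scope ring_scope.

Section Defs.
Variable R : realType.
Variable J : finType.
Implicit Types (x : J -> 'rV[R]_2) (s : 'rV[R]_2).

Definition enorm (v : 'rV[R]_2) : R := Num.sqrt (\sum_(i < 2) v 0 i ^+ 2).

(* max_{i in J} ||s - x_i|| (J nonempty in use; distances are >= 0) *)
Definition maxdist x s : R := \big[Num.max/0]_(i : J) enorm (s - x i).

Definition is_1centre x (c : 'rV[R]_2) : Prop := forall s, maxdist x c <= maxdist x s.

Definition Ppow x s : R :=
  \sum_(i : J) enorm (s - x i) ^+ 2 + \big[Num.max/0]_(i : J) enorm (s - x i) ^+ 2.

Definition is_qmp_centre x (c : 'rV[R]_2) : Prop := forall s, Ppow x c <= Ppow x s.

Definition Mpt x (j : J) : 'rV[R]_2 := (#|J|.+1%:R)^-1 *: (x j + \sum_(i : J) x i).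

Definition in_conv (y : J -> 'rV[R]_2) (p : 'rV[R]_2) : Prop :=
  exists w : J -> R, (forall j, 0 <= w j) /\ \sum_(j : J) w j = 1 /\
                      p = \sum_(j : J) w j *: y j.
End Defs.

(* Main.v *)
Require Import Defs.
From HB Require Import structures.
From mathcomp Require Import all_boot all_order all_algebra.
From mathcomp Require Import reals.
From mathcomp Require Import ring lra.
Set Implicit Arguments. Unset Strict Implicit. Unset Printing Implicit Defensive.
Import Order.TTheory GRing.Theory Num.Theory.
Local Open Scope ring_scope.

Definition pr (R : realType) k (y v : 'rV[R]_k) : R := \sum_i y 0 i * v 0 i.

Definition incone (R : realType) k (s : seq 'rV[R]_k) (b : 'rV[R]_k) : Prop :=
  exists c : nat -> R, (forall i, 0 <= c i) /\ b = \sum_(i < size s) c i *: s`_i.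

Lemma prBl (R : realType) k (y1 y2 v : 'rV[R]_k) (t : R) :
  pr (y1 - t *: y2) v = pr y1 v - t * pr y2 v.
Proof.
rewrite /pr mulr_sumr -sumrB; apply: eq_bigr => i _; rewrite !mxE; ring.
Qed.

Lemma prBr (R : realType) k (y v a : 'rV[R]_k) (t : R) :
  pr y (v - t *: a) = pr y v - t * pr y a.
Proof.
rewrite /pr mulr_sumr -sumrB; apply: eq_bigr => i _; rewrite !mxE; ring.
Qed.

Lemma prNself (R : realType) k (b : 'rV[R]_k) : b != 0 -> pr (- b) b < 0.
Proof.
move=> bn0.
have [i bi] : exists i, b 0 i != 0.
  apply/existsP; apply: contraR bn0 => /existsPn H; apply/eqP/rowP => j.
  by rewrite mxE; move: (H j); rewrite negbK => /eqP.
have -> : pr (- b) b = - \sum_j b 0 j ^+ 2.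
  by rewrite /pr -sumrN; apply: eq_bigr => j _; rewrite mxE mulNr expr2.
rewrite oppr_lt0 (bigD1 i) //=.
have h1 : 0 < b 0 i ^+ 2 by rewrite lt0r sqr_ge0 andbT sqrf_eq0.
have h2 : 0 <= \sum_(j | j != i) b 0 j ^+ 2 by apply: sumr_ge0 => j _; exact: sqr_ge0.
lra.
Qed.

Lemma pr0 (R : realType) k (y : 'rV[R]_k) : pr y 0 = 0.
Proof. by rewrite /pr big1 // => i _; rewrite mxE mulr0. Qed.

Lemma farkas (R : realType) k n : forall (s : seq 'rV[R]_k) b, size s = n ->
  incone s b \/ exists y, (forall a, a \in s -> 0 <= pr y a) /\ pr y b < 0.
Proof.
elim: n => [|n IH] s b.
  move/size0nil => ->; case: (eqVneq b 0) => [->|bn0].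
    by left; exists (fun=> 0); split => //; rewrite big_ord0.
  by right; exists (-b); split => //; exact: prNself.
case: s => [//|a s'] /= [Hs].
case: (IH s' b Hs) => [[c [c0 hb]]|[y' [hy' hyb]]].
  left; exists (fun i => if i is i'.+1 then c i' else 0); split; first by case.
  by rewrite big_ord_recl /= scale0r add0r hb.
case: (lerP 0 (pr y' a)) => ha.
  right; exists y'; split => // a0; rewrite in_cons => /orP [/eqP -> //|]; exact: hy'.
set al := pr y' a in ha.
have aln0 : al != 0 by rewrite lt_eqF.
pose pi v := v - (pr y' v / al) *: a.
case: (IH (map pi s') (pi b)); first by rewrite size_map.
  case=> c [c0 hb]; left.
  pose T := \sum_(j < size s') c j * pr y' s'`_j.
  have T0 : 0 <= T.
    apply: sumr_ge0 => j _; apply: mulr_ge0 => //; apply: hy'; exact: mem_nth.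
  exists (fun i => if i is i'.+1 then c i' else (pr y' b - T) / al); split.
    case => [|i] //; apply: mulr_le0; first lra.
    by rewrite invr_le0 ltW.
  have e : \sum_(i < size (map pi s')) c i *: (map pi s')`_i =
           \sum_(i < size s') c i *: s'`_i - (T / al) *: a.
    rewrite size_map.
    under eq_bigr => i _ do rewrite (nth_map 0) // /pi scalerBr scalerA.
    by rewrite sumrB -scaler_suml /T mulr_suml; under [X in _ - X *: _ = _]eq_bigr do rewrite mulrA.
  have eb : b = pi b + (pr y' b / al) *: a by rewrite /pi subrK.
  rewrite big_ord_recl /= {1}eb hb e mulrBl scalerBl.
  set S := \sum_(i < size s') _.
  set u := (pr y' b / al) *: a. set w := (T / al) *: a.
  by rewrite [LHS]addrAC [RHS]addrC addrA.
case=> y'' [h1 h2]; right.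
have key : forall v, pr (y'' - (pr y'' a / al) *: y') v = pr y'' (pi v).
  by move=> v; rewrite prBl /pi prBr; field.
exists (y'' - (pr y'' a / al) *: y'); split; last by rewrite key.
move=> a0; rewrite in_cons key => /orP [/eqP ->|ha0].
  by rewrite /pi /al divff // scale1r subrr pr0.
by apply: h1; exact: map_f.
Qed.
Definition c0 : 'I_2 := ord0.
Definition c1 : 'I_2 := lift ord0 ord0.
Definition sq (R : realType) (v : 'rV[R]_2) : R := v 0 c0 ^+ 2 + v 0 c1 ^+ 2.
Definition dot2 (R : realType) (h v : 'rV[R]_2) : R := h 0 c0 * v 0 c0 + h 0 c1 * v 0 c1.
Definition Gf (R : realType) (J : finType) (x : J -> 'rV[R]_2) j s : R :=
  \sum_i sq (s - x i) + sq (s - x j).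

Lemma enorm2 (R : realType) (v : 'rV[R]_2) : enorm v ^+ 2 = sq v.
Proof.
rewrite /enorm sqr_sqrtr; last by apply: sumr_ge0 => i _; exact: sqr_ge0.
by rewrite !big_ord_recl big_ord0 addr0.
Qed.

Lemma sq_ge0 (R : realType) (v : 'rV[R]_2) : 0 <= sq v.
Proof. by rewrite /sq addr_ge0 ?sqr_ge0. Qed.

Lemma row2_eq (R : realType) (u v : 'rV[R]_2) : u 0 c0 = v 0 c0 -> u 0 c1 = v 0 c1 -> u = v.
Proof.
move=> h0 h1; apply/rowP => k.
have [->|->] : k = c0 \/ k = c1 by case: k => [[|[|//]] p]; [left|right]; apply: val_inj.
  by [].
by [].
Qed.

Lemma sum_lin3 (R : realType) (J : finType) (a b c : R) (f g k : J -> R) :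
  \sum_j (a * f j + b * g j + c * k j) = a * \sum_j f j + b * \sum_j g j + c * \sum_j k j.
Proof. by rewrite !big_split /= -!mulr_sumr. Qed.

Lemma sum1 (R : realType) (J : finType) : \sum_(j : J) (1 : R) = #|J|%:R.
Proof. by rewrite sumr_const. Qed.

Lemma sumc (R : realType) (J : finType) (c : R) : \sum_(j : J) c = #|J|%:R * c.
Proof. by rewrite sumr_const mulr_natl. Qed.

Lemma sq_shift (R : realType) (v h y : 'rV[R]_2) :
  sq (v + h - y) = sq (v - y) + 2 * dot2 h (v - y) + sq h.
Proof. by rewrite /sq /dot2 !mxE; ring. Qed.

Lemma Gshift (R : realType) (J : finType) (x : J -> 'rV[R]_2) C h j :
  Gf x j (C + h) = Gf x j C + 2 * (#|J|%:R + 1) * dot2 h (C - Mpt x j)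
                   + (#|J|%:R + 1) * sq h.
Proof.
rewrite /Gf; under eq_bigr do rewrite sq_shift; rewrite sq_shift.
rewrite big_split big_split /= sumc.
have E : \sum_i 2 * dot2 h (C - x i) =
   2 * (h 0 c0 * C 0 c0 + h 0 c1 * C 0 c1) * \sum_(i : J) 1
   + (-2 * h 0 c0) * \sum_i x i 0 c0 + (-2 * h 0 c1) * \sum_i x i 0 c1.
  rewrite -sum_lin3; apply: eq_bigr => i _; rewrite /dot2 !mxE; ring.
rewrite E sum1 /dot2 !mxE !summxE -natr1.
have hn : #|J|%:R + 1 != 0 :> R by rewrite natr1 pnatr_eq0.
field. by rewrite addrC.
Qed.

Lemma sum_enum (V : nmodType) (J : finType) (j0 : J) (F : nat -> J -> V) :
  \sum_(j : J) F (index j (enum J)) j = \sum_(i < #|J|) F i (nth j0 (enum J) i).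
Proof.
rewrite -big_enum /= (big_nth j0) big_mkord cardE; apply: eq_bigr => i _.
by rewrite index_uniq ?enum_uniq.
Qed.

Definition d0 : 'I_3 := ord0.
Definition d1 : 'I_3 := lift ord0 ord0.
Definition d2 : 'I_3 := lift ord0 (lift ord0 ord0).
Definition L3 (R : realType) (v : 'rV[R]_2) : 'rV[R]_3 :=
  \row_(i < 3) [:: v 0 c0; v 0 c1; 1]`_i.

Lemma prL (R : realType) (y : 'rV[R]_3) v :
  pr y (L3 v) = y 0 d0 * v 0 c0 + y 0 d1 * v 0 c1 + y 0 d2.
Proof. by rewrite /pr !big_ord_recl big_ord0 !mxE /= addr0 mulr1 addrA. Qed.

Theorem proposition3 (R : realType) (J : finType) (x : J -> 'rV[R]_2)
    (C : 'rV[R]_2) :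
  (0 < #|J|)%N -> injective x ->
  is_1centre x C ->
  (exists r : R, forall j : J, enorm (C - x j) = r) ->
  (is_qmp_centre x C <-> in_conv (Mpt x) C).
Proof.
move=> Jpos _ _ [r Hr].
have /card_gt0P [j0 _] := Jpos.
have N0 : 0 <= #|J|%:R :> R by [].
have HrC : forall j, sq (C - x j) = r ^+ 2 by move=> j; rewrite -enorm2 Hr.
have PE : forall s, Ppow x s = \sum_i sq (s - x i) + \big[Num.max/0]_i sq (s - x i).
  by move=> s; rewrite /Ppow; congr (_ + _); apply: eq_bigr => i _; exact: enorm2.
have GC : forall j, Gf x j C = (#|J|%:R + 1) * r ^+ 2.
  by move=> j; rewrite /Gf; under eq_bigr do rewrite HrC; rewrite HrC sumc; ring.
have PC : Ppow x C = (#|J|%:R + 1) * r ^+ 2.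
  rewrite PE; under eq_bigr do rewrite HrC.
  have -> : \big[Num.max/0]_i sq (C - x i) = r ^+ 2.
    apply/le_anti/andP; split.
      by apply: bigmax_le => [|i _]; rewrite ?sqr_ge0 ?HrC.
    by rewrite -(HrC j0) le_bigmax.
  by rewrite sumc; ring.
have Gle : forall s j, Gf x j s <= Ppow x s.
  by move=> s j; rewrite PE /Gf lerD2l le_bigmax.
split.
- move=> Hmin.
  pose s3 := map (fun j => L3 (C - Mpt x j)) (enum J).
  case: (@farkas R 3 (size s3) s3 (L3 0) erefl) => [[c [cge hb]]|[y [hy hyb]]].
    have ent : forall k : 'I_3, L3 0 0 k =
        \sum_(i < #|J|) c i * L3 (C - Mpt x (nth j0 (enum J) i)) 0 k.
      move=> k; rewrite hb summxE /s3 size_map -cardE; apply: eq_bigr => i _.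
      by rewrite mxE (nth_map j0) // -cardE.
    have s1 : \sum_(i < #|J|) c i = 1.
      move: (ent d2); rewrite !mxE /= => ->; apply: eq_bigr => i _.
      by rewrite mxE /= mulr1.
    exists (fun j => c (index j (enum J))); split => //; split.
      by rewrite (sum_enum j0 (fun i _ => c i)).
    have ek : forall k, (k = c0 \/ k = c1) -> C 0 k =
        (\sum_j c (index j (enum J)) *: Mpt x j) 0 k.
      move=> k hk; rewrite summxE.
      under eq_bigr do rewrite mxE.
      rewrite (sum_enum j0 (fun i j => c i * Mpt x j 0 k)).
      have e0 : 0 = \sum_(i < #|J|) c i * (C - Mpt x (nth j0 (enum J) i)) 0 k.
        case: hk => ->.
          transitivity (L3 (0 : 'rV[R]_2) 0 d0); first by rewrite !mxE.
          by rewrite ent; apply: eq_bigr => i _; rewrite mxE.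
        transitivity (L3 (0 : 'rV[R]_2) 0 d1); first by rewrite !mxE.
        by rewrite ent; apply: eq_bigr => i _; rewrite mxE.
      move: e0; under eq_bigr do rewrite [(C - _) 0 k]mxE mxE mulrDr mulrN.
      rewrite sumrB -mulr_suml s1 mul1r => /eqP; rewrite eq_sym subr_eq0 => /eqP.
      done.
    by apply: row2_eq; apply: ek; [left|right].
  have y2n : y 0 d2 < 0.
    by move: hyb; rewrite prL !mxE /= !mulr0 !add0r.
  set e := - y 0 d2.
  have e0 : 0 < e by rewrite /e oppr_gt0.
  have hA : forall j, e <= y 0 d0 * (C - Mpt x j) 0 c0 + y 0 d1 * (C - Mpt x j) 0 c1.
    move=> j; have := hy (L3 (C - Mpt x j)) (map_f _ (mem_enum _ j)).
    rewrite prL /e; lra.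
  set q := y 0 d0 ^+ 2 + y 0 d1 ^+ 2.
  have q0 : 0 <= q by rewrite /q addr_ge0 ?sqr_ge0.
  set t := e / (q + 1).
  have t0 : 0 < t by rewrite /t divr_gt0 // ltr_wpDl.
  have tq : t * q < e.
    rewrite /t mulrAC ltr_pdivrMr ?ltr_wpDl //.
    by rewrite ltr_pM2l // ltrDl.
  pose h := \row_(i < 2) (- t * [:: y 0 d0; y 0 d1]`_i).
  have h0 : h 0 c0 = - t * y 0 d0 by rewrite mxE.
  have h1 : h 0 c1 = - t * y 0 d1 by rewrite mxE.
  have sqh : sq h = t * (t * q) by rewrite /sq h0 h1 /q; ring.
  have Glt : forall j, Gf x j (C + h) < (#|J|%:R + 1) * r ^+ 2.
    move=> j; rewrite Gshift GC sqh /dot2 h0 h1.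
    set A := y 0 d0 * (C - Mpt x j) 0 c0 + y 0 d1 * (C - Mpt x j) 0 c1.
    have hAj := hA j.
    have X1 : t * e <= t * A by rewrite ler_wpM2l // ltW.
    have X2 : t * (t * q) < t * e by rewrite ltr_pM2l.
    have X : -2 * (t * A) + t * (t * q) < 0 by have := mulr_gt0 t0 e0; lra.
    have Np : 0 < #|J|%:R + 1 :> R by rewrite ltr_wpDl.
    rewrite -subr_lt0; set Z := (X in X < 0).
    have -> : Z = (#|J|%:R + 1) * (-2 * (t * A) + t * (t * q)) by rewrite /Z /A; ring.
    by rewrite pmulr_rlt0.
  have := Hmin (C + h); rewrite PC PE.
  set S := \sum_i sq (C + h - x i).
  have Bm : \big[Num.max/0]_i sq (C + h - x i) < (#|J|%:R + 1) * r ^+ 2 - S.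
    apply: bigmax_lt => [|i _].
      have := Glt j0; have := sq_ge0 (C + h - x j0); rewrite /Gf -/S; lra.
    by have := Glt i; rewrite /Gf -/S; lra.
  lra.
- move=> [w [w0 [w1 HC]]] s.
  have Hs : s = C + (s - C) by rewrite addrC subrK.
  set h := s - C.
  have Ce : forall k, C 0 k = \sum_j w j * Mpt x j 0 k.
    by move=> k; rewrite {1}HC summxE; apply: eq_bigr => j _; rewrite mxE.
  have D0 : \sum_j w j * dot2 h (C - Mpt x j) = 0.
    rewrite (eq_bigr (fun j => (h 0 c0 * C 0 c0 + h 0 c1 * C 0 c1) * w j
        + (- h 0 c0) * (w j * Mpt x j 0 c0) + (- h 0 c1) * (w j * Mpt x j 0 c1))).
      by rewrite sum_lin3 w1 -!Ce; ring.
    by move=> j _; rewrite /dot2 [(C - _) 0 c0]mxE [(C - _) 0 c1]mxE !mxE; ring.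
  have E : \sum_j w j * Gf x j (C + h) = (#|J|%:R + 1) * r ^+ 2 + (#|J|%:R + 1) * sq h.
    rewrite (eq_bigr (fun j => ((#|J|%:R + 1) * r ^+ 2 + (#|J|%:R + 1) * sq h) * w j
        + (2 * (#|J|%:R + 1)) * (w j * dot2 h (C - Mpt x j)) + 0 * w j)).
      by rewrite sum_lin3 w1 D0; ring.
    by move=> j _; rewrite Gshift GC; ring.
  have H1 : \sum_j w j * Gf x j (C + h) <= Ppow x (C + h).
    rewrite -[leRHS]mul1r -w1 mulr_suml; apply: ler_sum => j _.
    by apply: ler_wpM2l; [exact: w0 | exact: Gle].
  rewrite Hs PC; move: H1; rewrite E.
  have := mulr_ge0 (addr_ge0 N0 ler01) (sq_ge0 h).
  lra.
Qed.
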